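(* Let $E/F$ be a quadratic extension of fields of characteristic $0$, $\beta\in\mathrm{GL}_n(E)$ skew-Hermitian, and $\zeta\in\mathrm{GL}_n(E)$ normal with respect to $\beta$ such that $\beta^{-1}\zeta^*\beta\zeta$ is regular semisimple. Then $T_\zeta=\{(g,h)\in\mathrm{U}_n^\beta(F)\times\mathrm{U}_n^\beta(F):g^{-1}\zeta h=\zeta\}$ is contained in the diagonal $\{(h,h):h\in\mathrm{U}_n^\beta(F)\}$; thus $T_\zeta$ identifies with the centralizer of $\zeta$ in $\mathrm{U}_n^\beta(F)$.
   Context: $g^*={}^t\bar g$ where $\bar{\ }$ is the nontrivial automorphism of $E/F$; $\beta$ skew-Hermitian means $\beta^*=-\beta$; $\mathrm{U}_n^\beta(F)=\{h\in\mathrm{GL}_n(E):h^*\beta h=\beta\}$. $\zeta$ is normal with respect to $\beta$ if $\zeta$ commutes with $\beta^{-1}\zeta^*\beta\zeta$. *)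

(* Defs.v *)
From HB Require Import structures.
From mathcomp Require Import all_boot all_order all_algebra all_field.
Set Implicit Arguments. Unset Strict Implicit. Unset Printing Implicit Defensive.
Import GRing.Theory.
Local Open Scope ring_scope.

(* The quadratic extension E/F is modelled by the field E together with its
   nontrivial involutive automorphism sigma (the "bar" map); F is the fixed
   field of sigma. *)
Definition quad_involution (E : fieldType) (sigma : {rmorphism E -> E}) : Prop :=
  (forall x, sigma (sigma x) = x) /\ (exists x, sigma x != x).

Definition in_base (E : fieldType) (sigma : {rmorphism E -> E}) (x : E) : bool :=
  sigma x == x.

Definition cstar (E : fieldType) (sigma : {rmorphism E -> E}) (n : nat)
  (g : 'M[E]_n) : 'M[E]_n := (map_mx sigma g)^T.

Definition skew_hermitian (E : fieldType) (sigma : {rmorphism E -> E}) (n : nat)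
  (b : 'M[E]_n) : Prop := cstar sigma b = - b.

Definition unitary_group (E : fieldType) (sigma : {rmorphism E -> E}) (n : nat)
  (b : 'M[E]_n) (h : 'M[E]_n) : Prop :=
  h \in unitmx /\ cstar sigma h *m b *m h = b.

Definition normal_wrt (E : fieldType) (sigma : {rmorphism E -> E}) (n : nat)
  (b z : 'M[E]_n) : Prop :=
  let w := invmx b *m cstar sigma z *m b *m z in z *m w = w *m z.

(* regular semisimple in GL_n(E): invertible with separable characteristic
   polynomial (n distinct eigenvalues over an algebraic closure) *)
Definition regular_semisimple (E : fieldType) (n : nat) (A : 'M[E]_n) : Prop :=
  A \in unitmx /\ separable_poly (char_poly A).

Definition T_zeta (E : fieldType) (sigma : {rmorphism E -> E}) (n : nat)
  (b z : 'M[E]_n) (gh : 'M[E]_n * 'M[E]_n) : Prop :=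
  unitary_group sigma b gh.1 /\ unitary_group sigma b gh.2 /\
  invmx gh.1 *m z *m gh.2 = z.

(* Main.v *)
Require Import Defs.
From HB Require Import structures.
From mathcomp Require Import all_boot all_order all_algebra all_field.
Import GRing.Theory.
Local Open Scope ring_scope.
Set Implicit Arguments. Unset Strict Implicit. Unset Printing Implicit Defensive.

Section Key.
Variables (E : fieldType) (n : nat).
Local Notation R := {poly E}.

Definition c0 (X : 'M[R]_n) : 'M[E]_n := map_mx (fun p : R => p`_0) X.
Definition c1 (X : 'M[R]_n) : 'M[E]_n := map_mx (fun p : R => p`_1) X.

Lemma coefM1 (p q : R) : (p * q)`_1 = p`_0 * q`_1 + p`_1 * q`_0.
Proof. by rewrite coefM big_ord_recr big_ord1 /= addrC. Qed.

Lemma coefM0 (p q : R) : (p * q)`_0 = p`_0 * q`_0.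
Proof. by rewrite coefM big_ord1. Qed.

Lemma c0M (X Y : 'M[R]_n) : c0 (X *m Y) = c0 X *m c0 Y.
Proof.
apply/matrixP => i j; rewrite !mxE coef_sum; apply: eq_bigr => k _.
by rewrite !mxE coefM0.
Qed.

Lemma c1M (X Y : 'M[R]_n) : c1 (X *m Y) = c0 X *m c1 Y + c1 X *m c0 Y.
Proof.
apply/matrixP => i j; rewrite !mxE coef_sum -big_split; apply: eq_bigr => k _.
by rewrite !mxE coefM1.
Qed.

Lemma c1Z (f : R) (X : 'M[R]_n) : c1 (f *: X) = f`_0 *: c1 X + f`_1 *: c0 X.
Proof. by apply/matrixP => i j; rewrite !mxE coefM1. Qed.

Lemma c1_sum m (F : 'I_m -> 'M[R]_n) : c1 (\sum_(i < m) F i) = \sum_(i < m) c1 (F i).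
Proof.
apply/matrixP => i j; rewrite mxE summxE coef_sum summxE; apply: eq_bigr => k _.
by rewrite !mxE.
Qed.
End Key.

Lemma horner_mx_wide (R' : comNzRingType) n (X : 'M[R']_n.+1) (q : {poly R'}) (m : nat) :
  (size q <= m)%N -> horner_mx X q = \sum_(i < m) q`_i *: X ^+ i.
Proof.
move=> hq.
have qE : q = \poly_(i < m) q`_i.
  apply/polyP => i; rewrite coef_poly; case: ltnP => // hi.
  by rewrite nth_default // (leq_trans hq hi).
rewrite {1}qE poly_def rmorph_sum; apply: eq_bigr => i _.
rewrite -mul_polyC rmorphM /= horner_mx_C rmorphXn /= horner_mx_X.
by rewrite -mul_scalar_mx.
Qed.

Section Key2.
Variables (E : fieldType) (n : nat) (A B : 'M[E]_n.+1).
Hypothesis AB : A *m B = B *m A.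
Local Notation R := {poly E}.
Definition MM : 'M[R]_n.+1 := map_mx polyC A + 'X *: map_mx polyC B.

Lemma c0MM : c0 MM = A.
Proof. by apply/matrixP => i j; rewrite !mxE coefD coefC coefXM addr0. Qed.
Lemma c1MM : c1 MM = B.
Proof. by apply/matrixP => i j; rewrite !mxE coefD coefC coefXM add0r coefC. Qed.

Lemma c01 : c0 (1%:M : 'M[R]_n.+1) = 1%:M.
Proof. by apply/matrixP => i j; rewrite !mxE coefMn coef1. Qed.
Lemma c11 : c1 (1%:M : 'M[R]_n.+1) = 0.
Proof. by apply/matrixP => i j; rewrite !mxE coefMn coef1 mul0rn. Qed.

Lemma c0X k : c0 (MM ^+ k) = A ^+ k.
Proof.
elim: k => [|k IH]; first by rewrite !expr0 c01.
by rewrite !exprSr -!mulmxE c0M IH c0MM.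
Qed.

Lemma c1X k : c1 (MM ^+ k) = (A ^+ k.-1 *m B) *+ k.
Proof.
elim: k => [|k IH]; first by rewrite expr0 c11 mulr0n.
rewrite exprSr -mulmxE c1M c0X IH c1MM c0MM /=.
case: k IH => [|k] IH; first by rewrite !expr0 mul0mx addr0.
have AB' : B * A = A * B by rewrite -!mulmxE AB.
rewrite /= !mulmxE mulrnAl -mulrA AB' mulrA -exprSr.
by rewrite [in RHS]mulrS.
Qed.
Lemma c10 : c1 (0 : 'M[R]_n.+1) = 0.
Proof. by apply/matrixP => i j; rewrite !mxE coef0. Qed.

Lemma deriv_comm : exists r, horner_mx A (char_poly A)^`() *m B = horner_mx A r.
Proof.
set P := char_poly MM.
have CH := Cayley_Hamilton MM.
have sP : size P = n.+2 := size_char_poly MM.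
rewrite (@horner_mx_wide _ _ _ _ n.+2) in CH; last by rewrite sP.
have e : map_mx (horner_eval 0) MM = A.
  by rewrite -c0MM; apply/matrixP => i j; rewrite !mxE horner_evalE horner_coef0.
have Pc i : (P`_i)`_0 = (char_poly A)`_i.
  by rewrite -e -map_char_poly coef_map /= horner_evalE horner_coef0.
have := congr1 (@c1 E n.+1) CH; rewrite c1_sum c10.
under eq_bigr do rewrite c1Z c0X c1X.
rewrite big_split /= => H.
exists (- \poly_(i < n.+2) (P`_i)`_1).
rewrite rmorphN /= (@horner_mx_wide _ _ _ _ n.+2) ?size_poly //.
rewrite (@horner_mx_wide _ _ _ _ n.+1); last first.
  by rewrite (leq_trans (size_poly _ _)) // size_char_poly.
move/eqP: H; rewrite addr_eq0 => /eqP H.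
transitivity (\sum_(i < n.+2) (char_poly MM)`_i`_0 *: (A ^+ i.-1 *m B *+ i)); last first.
  rewrite H; congr (- _).
  by apply: eq_bigr => i _; rewrite coef_poly ltn_ord.
rewrite [RHS]big_ord_recl /= mulr0n scaler0 add0r mulmx_suml.
apply: eq_bigr => i _; rewrite /bump leq0n add1n add0n Pc coef_deriv -scalemxAl -scalerMnl -scalerMnr.
by [].
Qed.
End Key2.

Lemma comm_poly_of_sep (E : fieldType) n (A B : 'M[E]_n.+1) :
  A *m B = B *m A -> separable_poly (char_poly A) -> exists r, B = horner_mx A r.
Proof.
move=> AB; rewrite unlock => /Bezout_eq1_coprimepP [[u v] /= huv].
have [r hr] := deriv_comm AB.
have h1 : horner_mx A v *m horner_mx A (char_poly A)^`() = 1%:M.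
  have := congr1 (horner_mx A) huv.
  rewrite rmorphD !rmorphM /= Cayley_Hamilton mulr0 add0r rmorph1 => e.
  by rewrite mulmxE e idmxE.
by exists (v * r); rewrite rmorphM /= -hr -mulmxE mulmxA h1 mul1mx.
Qed.

Lemma cstarM (E : fieldType) (sigma : {rmorphism E -> E}) n (X Y : 'M[E]_n) :
  cstar sigma (X *m Y) = cstar sigma Y *m cstar sigma X.
Proof. by rewrite /cstar map_mxM trmx_mul. Qed.

Lemma unit_inv (E : fieldType) (sigma : {rmorphism E -> E}) n (b h : 'M[E]_n) :
  b \in unitmx -> h \in unitmx -> cstar sigma h *m b *m h = b ->
  h *m invmx b *m cstar sigma h = invmx b.
Proof.
move=> bu hu H.
have H1 : cstar sigma h *m b = b *m invmx h by rewrite -[in RHS]H mulmxK.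
have H2 : invmx b *m cstar sigma h *m b = invmx h.
  by rewrite -mulmxA H1 mulmxA mulVmx // mul1mx.
have H3 : h *m invmx b *m cstar sigma h *m b = 1%:M.
  by rewrite -!mulmxA [invmx b *m _]mulmxA H2 mulmxV.
by rewrite -[LHS]mulmx1 -(mulmxV bu) mulmxA H3 mul1mx.
Qed.

Theorem mainTheorem10 (E : fieldType) (sigma : {rmorphism E -> E}) (n : nat)
  (beta zeta : 'M[E]_n) :
  [pchar E] =i pred0 ->
  quad_involution sigma ->
  beta \in unitmx -> skew_hermitian sigma beta ->
  zeta \in unitmx -> normal_wrt sigma beta zeta ->
  regular_semisimple (invmx beta *m cstar sigma zeta *m beta *m zeta) ->
  forall g h : 'M[E]_n, T_zeta sigma beta zeta (g, h) ->
    g = h /\ unitary_group sigma beta h.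
Proof.
move=> _ _ bu _ zu zN [_ sep] g h [[gu gU] [[hu hU] Heq]] /=.
split; last by split.
move: Heq zN sep gU hU; rewrite /= /normal_wrt /=.
case: n beta zeta g h bu zu gu hu => [|n] beta zeta g h bu zu gu hu Heq zN sep gU hU.
  by apply/matrixP => [[]].
set w := invmx beta *m cstar sigma zeta *m beta *m zeta.
have zh : zeta *m h = g *m zeta.
  by rewrite -[in RHS]Heq !mulmxA mulmxV // mul1mx.
set S := cstar sigma zeta *m beta *m zeta.
have hS : cstar sigma h *m S *m h = S.
  have : cstar sigma (zeta *m h) *m beta *m (zeta *m h) = S.
    rewrite zh !cstarM -!mulmxA [beta *m _]mulmxA [cstar sigma g *m _]mulmxA.
    by rewrite [cstar sigma g *m _]mulmxA gU /S mulmxA.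
  by rewrite cstarM /S !mulmxA; apply.
have wE : w = invmx beta *m S by rewrite /w /S !mulmxA.
have hw : w *m h = h *m w.
  rewrite wE [RHS]mulmxA -{2}hS !mulmxA.
  by rewrite (unit_inv bu hu hU).
have [r hr] := comm_poly_of_sep hw sep.
have zc : comm_mx zeta (horner_mx w r) by apply: comm_mx_horner.
have : g *m zeta = h *m zeta by rewrite -zh hr zc.
by move/(congr1 (mulmx^~ (invmx zeta))); rewrite !mulmxK.
Qed.
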